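(* Let $G$ be an abelian group and $\precsim$ a total quasi-order on $G$. Then $\precsim$ is compatible with $+$ if and only if there exist abelian groups $A$ and $F$ and an exact sequence $0\to A\xrightarrow{\iota}G\xrightarrow{\pi}F\to0$, a group order $\leq_o$ on $A$ (making $(A,\leq_o)$ an ordered abelian group) and a valuation $v$ on $F$ such that for all $g,h\in G$: $g\precsim h\Leftrightarrow \big(g,h\in\iota(A)\wedge\iota^{-1}(g)\leq_o\iota^{-1}(h)\big)\vee\big(h\notin\iota(A)\wedge v(\pi(g))\geq v(\pi(h))\big).$
   Context: A quasi-order is a reflexive transitive relation; total means any two elements are comparable. $a\sim b$ means $a\precsim b\wedge b\precsim a$. $\precsim$ is compatible with $+$ if $(Q_1)$: $x\sim0\Rightarrow x=0$, and $(Q_2)$: $x\precsim y\wedge y\not\sim z\Rightarrow x+z\precsim y+z$, for all $x,y,z\in G$. A valuation on an abelian group $F$ is a map $v:F\to\Gamma\cup\{\infty\}$ ($\Gamma$ totally ordered, $\infty$ above $\Gamma$) with $v(a)=\infty\Leftrightarrow a=0$, $v(a+b)\ge\min(v(a),v(b))$, $v(-a)=v(a)$. *)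

(* Defs.v *)
From HB Require Import structures.
From mathcomp Require Import all_boot all_order all_algebra.
Set Implicit Arguments. Unset Strict Implicit. Unset Printing Implicit Defensive.
Import Order.TTheory GRing.Theory Num.Theory.
Local Open Scope ring_scope.

Definition quasi_order (T : Type) (le : T -> T -> Prop) : Prop :=
  (forall x, le x x) /\ (forall x y z, le x y -> le y z -> le x z).

Definition total_rel (T : Type) (le : T -> T -> Prop) : Prop :=
  forall x y, le x y \/ le y x.

Definition qsim (T : Type) (le : T -> T -> Prop) (x y : T) : Prop :=
  le x y /\ le y x.

(* (Q1) and (Q2) *)
Definition compatible_add (G : zmodType) (le : G -> G -> Prop) : Prop :=
  (forall x : G, qsim le x 0 -> x = 0) /\
  (forall x y z : G, le x y -> ~ qsim le y z -> le (x + z) (y + z)).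

Definition group_order (A : zmodType) (leo : A -> A -> Prop) : Prop :=
  (forall x, leo x x) /\
  (forall x y, leo x y -> leo y x -> x = y) /\
  (forall x y z, leo x y -> leo y z -> leo x z) /\
  (forall x y, leo x y \/ leo y x) /\
  (forall x y z, leo x y -> leo (x + z) (y + z)).

(* Gamma ∪ {∞} is modelled as option Gamma, with None = ∞ above Gamma. *)
Definition ole (d : Order.disp_t) (Gam : orderType d) (a b : option Gam) : Prop :=
  match b with
  | None => True
  | Some y => match a with None => False | Some x => (x <= y)%O end
  end.

Definition omin (d : Order.disp_t) (Gam : orderType d) (a b : option Gam) : option Gam :=
  match a, b with
  | None, _ => b
  | _, None => a
  | Some x, Some y => Some (Order.min x y)
  end.

Definition valuation (F : zmodType) (d : Order.disp_t) (Gam : orderType d)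
  (v : F -> option Gam) : Prop :=
  (forall a, v a = None <-> a = 0) /\
  (forall a b, ole (omin (v a) (v b)) (v (a + b))) /\
  (forall a, v (- a) = v a).

Definition short_exact (A G F : zmodType) (iota : {additive A -> G})
  (pi : {additive G -> F}) : Prop :=
  injective iota /\ (forall y : F, exists g, pi g = y) /\
  (forall g : G, (exists a, iota a = g) <-> pi g = 0).

(* Main.v *)
Require Import Defs.
From HB Require Import structures.
From mathcomp Require Import all_boot all_order all_algebra.
From Stdlib Require Import ClassicalEpsilon Classical.
Set Implicit Arguments. Unset Strict Implicit. Unset Printing Implicit Defensive.
Import Order.TTheory GRing.Theory Num.Theory.
Local Open Scope ring_scope.

Section OLE.
Variables (d : Order.disp_t) (Gam : orderType d).
Implicit Types a b c : option Gam.

Lemma ole_refl a : ole a a.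
Proof. by case: a => //= x. Qed.

Lemma ole_trans a b c : ole a b -> ole b c -> ole a c.
Proof.
case: c => [z|] //; case: b => [y|] //=; case: a => [x|] //=.
exact: Order.POrderTheory.le_trans.
Qed.

Lemma ole_total a b : ole a b \/ ole b a.
Proof.
case: a => [x|]; case: b => [y|] /=; try by [left|right].
by case/orP: (le_total x y); [left|right].
Qed.

Lemma ole_anti a b : ole a b -> ole b a -> a = b.
Proof.
case: a => [x|]; case: b => [y|] //= h1 h2.
by congr Some; apply/eqP; rewrite eq_le h1 h2.
Qed.

Lemma omin_cases a b : (omin a b = a /\ ole a b) \/ (omin a b = b /\ ole b a).
Proof.
case: a => [x|]; case: b => [y|] /=; try by [left|right; split].
- case/orP: (le_total x y) => h.
  + by left; rewrite min_l.
  + by right; rewrite min_r.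
Qed.

Lemma omin_ge a b c : ole c a -> ole c b -> ole c (omin a b).
Proof. by case: (omin_cases a b) => [[-> _]|[-> _]]. Qed.
End OLE.

Section Rev.
Variables (G A F : zmodType) (iota : {additive A -> G}) (pi : {additive G -> F}).
Variables (leo : A -> A -> Prop) (d : Order.disp_t) (Gam : orderType d) (v : F -> option Gam).
Variable le : G -> G -> Prop.
Hypotheses (Hex : short_exact iota pi) (Hgo : group_order leo) (Hv : valuation v).
Hypothesis Hr : forall g h : G,
       le g h <->
       ((exists a b : A, iota a = g /\ iota b = h /\ leo a b) \/
        ((~ exists b : A, iota b = h) /\ ole (v (pi h)) (v (pi g)))).

Lemma vstrict a b : ~ ole (v a) (v b) -> v (a + b) = v b.
Proof.
move=> nab; have [_ [Hu Hn]] := Hv.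
have t1 : ole (v b) (v (a + b)).
  case: (omin_cases (v a) (v b)) => [[_ h]|[e _]].
  - by case: (nab h).
  - by have := Hu a b; rewrite e.
apply: ole_anti => //.
have := Hu (a + b) (- a); rewrite addrAC subrr add0r Hn.
case: (omin_cases (v (a + b)) (v a)) => [[-> _]|[-> h]] //.
Qed.

Lemma vstrict' a b : ~ ole (v a) (v b) -> v (a + b) = v b.
Proof. exact: vstrict. Qed.

Definition inI (h : G) := exists b : A, iota b = h.

Lemma inI_pi h : inI h <-> pi h = 0.
Proof. by have [_ [_ H]] := Hex; apply: H. Qed.

Lemma vY y : ~ inI y -> v (pi y) <> None.
Proof.
move=> ny e; apply: ny; apply: (proj2 (inI_pi _)).
by have [H _] := Hv; exact: (proj1 (H (pi y)) e).
Qed.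

Lemma rev_Q1 : forall x : G, qsim le x 0 -> x = 0.
Proof.
move=> x [h1 h2].
have [inj _] := Hex.
case/Hr: h1 => [[a [b [ea [eb hab]]]]|[nb _]]; last first.
  by case: nb; exists 0; rewrite raddf0.
case/Hr: h2 => [[a' [b' [ea' [eb' hab']]]]|[nb _]]; last first.
  by case: nb; exists a.
have b0 : b = 0 by apply: inj; rewrite eb raddf0.
have a0' : a' = 0 by apply: inj; rewrite ea' raddf0.
have ab : b' = a by apply: inj; rewrite eb' ea.
subst b a' b'.
have [_ [anti _]] := Hgo.
by rewrite -ea (anti _ _ hab hab') raddf0.
Qed.

Lemma rev_Q2 : forall x y z : G, le x y -> ~ qsim le y z -> le (x + z) (y + z).
Proof.
move=> x y z hxy nyz.
case/Hr: hxy => [[a [b [ea [eb hab]]]]|[ny hv]].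
- case: (classic (inI z)) => [[c ec]|nz].
  + apply/Hr; left; exists (a + c), (b + c); rewrite !raddfD ea eb ec.
    by split => //; split => //; have [_ [_ [_ [_ H]]]] := Hgo; apply: H.
  + apply/Hr; right; split.
    * move=> [e he]; apply: nz; exists (e - b); by rewrite raddfB he eb addrAC subrr add0r.
    * have px : pi x = 0 by apply: (proj1 (inI_pi _)); exists a.
      have py : pi y = 0 by apply: (proj1 (inI_pi _)); exists b.
      by rewrite !raddfD px py; apply: ole_refl.
- have [Hn [Hu Hneg]] := Hv.
  have nz_y := vY ny.
  (* y ~ z whenever v(pi z) = v (pi y) and z not in I *)
  have simyz : ~ inI z -> v (pi z) = v (pi y) -> False.
    move=> nz e; apply: nyz; split; apply/Hr; right; split => //; rewrite e; exact: ole_refl.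
  case: (classic (inI (y + z))) => [hyz|nyz'].
  + exfalso; have nz : ~ inI z.
      move=> [c ec]; apply: ny; case: hyz => [e he]; exists (e - c).
      by rewrite raddfB he ec addrK.
    apply: (simyz nz).
    have : pi (y + z) = 0 by exact: (proj1 (inI_pi _)).
    rewrite raddfD => /eqP; rewrite addr_eq0 => /eqP ->.
    by rewrite Hneg.
  + apply/Hr; right; split => //.
    rewrite !raddfD.
    case: (classic (ole (v (pi z)) (v (pi y)))) => hzy.
    * case: (classic (ole (v (pi y)) (v (pi z)))) => hyz.
        exfalso; have e := ole_anti hzy hyz.
        apply: (simyz _ e) => hz; apply: nz_y; rewrite -e.
        by apply: (proj2 (Hn _)); exact: (proj1 (inI_pi _)).
      rewrite (vstrict hyz).
      have nxz : ~ ole (v (pi x)) (v (pi z)).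
        by move=> h; apply: hyz; apply: ole_trans hv h.
      rewrite (vstrict nxz); exact: ole_refl.
    * have hyz : ole (v (pi y)) (v (pi z)).
        by case: (ole_total (v (pi y)) (v (pi z))).
      rewrite addrC (vstrict hzy).
      apply: ole_trans (Hu _ _).
      by apply: omin_ge.
Qed.

End Rev.

Section Theory.
Set Default Proof Using "All".
Variables (G : zmodType) (le : G -> G -> Prop).
Hypotheses (lr : forall x, le x x)
  (ltr : forall x y z, le x y -> le y z -> le x z)
  (ltot : forall x y, le x y \/ le y x)
  (Q1 : forall x : G, qsim le x 0 -> x = 0)
  (Q2 : forall x y z : G, le x y -> ~ qsim le y z -> le (x + z) (y + z)).

Definition inA (g : G) := qsim le g (- g) -> g = 0.

Lemma Q1' x : le x 0 -> le 0 x -> x = 0.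
Proof. by move=> a b; apply: Q1. Qed.

Lemma B1 x : le x 0 -> x <> 0 -> le 0 (- x) /\ ~ le (- x) 0.
Proof.
move=> hx nx.
have h : ~ qsim le 0 (- x).
  case=> a b; apply: nx; apply/eqP; rewrite -oppr_eq0; apply/eqP; exact: Q1' b a.
have := Q2 hx h; rewrite subrr add0r => h1; split => // h2.
apply: nx; apply/eqP; rewrite -oppr_eq0; apply/eqP; exact: Q1' h2 h1.
Qed.

Lemma Dl x : ~ qsim le x (- x) -> le 0 x -> le (- x) 0.
Proof. by move=> nx h; have := Q2 h nx; rewrite add0r subrr. Qed.

Lemma nA_pos y : ~ inA y -> qsim le y (- y) /\ y <> 0.
Proof. by move=> h; apply: (imply_to_and _ _ h). Qed.

Lemma pos_nA y : ~ inA y -> le 0 y /\ ~ le y 0.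
Proof.
move=> hy; have [[s1 s2] ny] := nA_pos hy.
have h : ~ le y 0.
  move=> hy0; have [_ b] := B1 hy0 ny; apply: b; exact: ltr s2 hy0.
by split => //; case: (ltot 0 y).
Qed.

Lemma inA0 : inA 0.
Proof. by []. Qed.

Lemma inAN x : inA x -> inA (- x).
Proof.
move=> h [a b]; rewrite opprK in a b.
by rewrite (h (conj b a)) oppr0.
Qed.

Lemma inAN' x : inA (- x) -> inA x.
Proof. by move/inAN; rewrite opprK. Qed.

Lemma nAN x : ~ inA x -> ~ inA (- x).
Proof. by move=> h /inAN'. Qed.

Lemma E x z : inA x -> inA z -> qsim le x z -> x = z.
Proof.
move=> hx hz [xz zx].
case: (classic (x = 0)) => [x0|nx0].
  by subst x; symmetry; apply: Q1' zx xz.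
case: (classic (z = 0)) => [z0|nz0].
  by subst z; apply: Q1' xz zx.
have nx : ~ qsim le x (- x) by move=> s; apply: nx0; exact: hx s.
have nz : ~ qsim le z (- z) by move=> s; apply: nz0; exact: hz s.
have h1 := Q2 zx nx; rewrite subrr in h1.
have h2 := Q2 xz nz; rewrite subrr in h2.
case: (classic (x - z = 0)) => [e|ne].
  by apply/eqP; rewrite -subr_eq0; apply/eqP.
have [_ b] := B1 h2 ne; by rewrite opprB in b.
Qed.

Lemma K x y : inA x -> ~ inA y -> le x y /\ ~ le y x.
Proof.
move=> hx hy.
suff nyx : ~ le y x by split => //; case: (ltot x y).
move=> hyx.
have [[sy1 sy2] ny] := nA_pos hy.
have [p0y np] := pos_nA hy.
case: (classic (x = 0)) => [x0|nx0].
  by subst x; apply: np.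
have nx : ~ qsim le x (- x) by move=> s; apply: nx0; exact: hx s.
have hx0 : ~ le x 0 by move=> h; apply: np; exact: ltr hyx h.
have p0x : le 0 x by case: (ltot 0 x).
have nx0' : le (- x) 0 := Dl nx p0x.
have h1 : le (- y - x) 0.
  by have := Q2 (ltr sy2 hyx) nx; rewrite subrr.
have h1' : - y - x <> 0.
  move=> e; apply: nx; move/eqP: e; rewrite subr_eq0 => /eqP e.
  by rewrite -e opprK; split.
have h2 : le (y - x) 0 by have := Q2 hyx nx; rewrite subrr.
case: (classic (le x y)) => [hxy|nxy].
- have hxy' : le x (- y) := ltr hxy sy1.
  have ns : ~ qsim le (- y) (- x).
    by case=> a _; apply: np; apply: ltr sy1 (ltr a nx0').
  have := Q2 hxy' ns; rewrite subrr => h3.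
  by apply: h1'; apply: Q1' h1 h3.
- have hu : le (x - y) (x + y).
    have ns : ~ qsim le y x by case.
    by have := Q2 sy2 ns; rewrite [- y + x]addrC [y + x]addrC.
  have hv : le (x + y) (x - y).
    have ns : ~ qsim le (- y) x by case=> _ b; apply: nxy; exact: ltr b sy2.
    by have := Q2 sy1 ns; rewrite [- y + x]addrC [y + x]addrC.
  have iu : inA (x + y).
    have [b1 b2] := B1 h1 h1'.
    move=> [a _]; exfalso; apply: b2.
    rewrite opprD !opprK addrC; apply: ltr a _; by rewrite opprD addrC.
  have h2' : y - x <> 0.
    move=> e; apply: nxy; move/eqP: e; rewrite subr_eq0 => /eqP ->; exact: lr.
  have iv : inA (x - y).
    have [b1 b2] := B1 h2 h2'.
    move=> [a _]; exfalso; apply: b2.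
    by rewrite opprB; apply: ltr a _; rewrite opprB.
  have e : x - y = x + y := E iv iu (conj hu hv).
  have bad : qsim le x (x + y) -> False.
    move=> s; apply: ny.
    by rewrite -(addKr x y) -(E hx iu s) addNr.
  case: (ltot x (x + y)) => h.
  + apply: bad; split => //.
    case: (classic (qsim le (x + y) (- y))) => [[a _]|ns].
      exact: ltr a (ltr sy2 hyx).
    by have := Q2 h ns; rewrite addrK -e.
  + apply: bad; split => //.
    case: (classic (qsim le x (- y))) => [[a _]|ns].
      by case: nxy; exact: ltr a sy2.
    by have := Q2 h ns; rewrite addrK -e.
Qed.

Lemma inAD a b : inA a -> inA b -> inA (a + b).
Proof.
move=> ha hb; apply: NNPP => hc.
have hnc : ~ inA (- (a + b)) by apply: nAN.
have h1 : le 0 a.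
  have [lbc _] := K hb hc.
  have [_ n] := K (inAN hb) hc.
  have ns : ~ qsim le (a + b) (- b) by case.
  by have := Q2 lbc ns; rewrite subrr addrK.
have h2 : le 0 (- a).
  have [lbc _] := K (inAN hb) hnc.
  have [_ n] := K hb hnc.
  have ns : ~ qsim le (- (a + b)) b by case.
  by have := Q2 lbc ns; rewrite addNr opprD subrK.
case: (classic (a = 0)) => [a0|na0].
  by apply: hc; rewrite a0 add0r.
have na : ~ qsim le a (- a) by move=> s; apply: na0; exact: ha s.
have := Dl na h1 => h3.
by apply: na0; apply/eqP; rewrite -oppr_eq0; apply/eqP; apply: Q1' h3 h2.
Qed.

Lemma le_two a : inA a -> le 0 a -> le a (a + a).
Proof.
move=> ha h.
case: (classic (a = 0)) => [->|na0]; first by rewrite addr0.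
have na : ~ qsim le a (- a) by move=> s; apply: na0; exact: ha s.
have h1 := Dl na h.
have ns : ~ qsim le 0 (a + a).
  case=> p q; have e := Q1' q p.
  apply: na; move/eqP: e; rewrite addr_eq0 => /eqP e.
  by rewrite -e; split; apply: lr.
by have := Q2 h1 ns; rewrite addKr add0r.
Qed.

Lemma pos_of_neg b : inA b -> le (- b) b -> le 0 b.
Proof.
move=> hb h.
case: (classic (b = 0)) => [->|nb]; first exact: lr.
case: (ltot 0 b) => // hb0.
have nb' : - b <> 0 by move/eqP; rewrite oppr_eq0 => /eqP.
have [_ c] := B1 (ltr h hb0) nb'.
by rewrite opprK in c.
Qed.

Lemma leA a b : inA a -> inA b -> (le a b <-> le 0 (b - a)).
Proof.
move=> ha hb; split => h.
- case: (classic (qsim le b (- a))) => [s|ns].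
  + have e := E hb (inAN ha) s.
    have ea : a = - b by rewrite e opprK.
    rewrite ea opprK.
    have p := pos_of_neg hb (ltac:(by rewrite -ea)).
    exact: ltr p (le_two hb p).
  + by have := Q2 h ns; rewrite subrr.
- case: (classic (qsim le (b - a) a)) => [s|ns].
  + have e := E (inAD hb (inAN ha)) ha s.
    have eb : b = a + a by apply/eqP; rewrite -subr_eq e.
    rewrite e in h; rewrite eb; exact: le_two ha h.
  + by have := Q2 h ns; rewrite add0r subrK.
Qed.

Lemma M y k : ~ inA y -> le y k -> ~ le k y -> qsim le (k + y) k.
Proof.
move=> hy hyk nky.
have [p0y _] := pos_nA hy.
have [[sy1 sy2] _] := nA_pos hy.
have h1 : le k (k + y).
  have ns : ~ qsim le y k by case.
  by have := Q2 p0y ns; rewrite add0r addrC.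
split => //.
have [p0y' _] := pos_nA (nAN hy).
have ns : ~ qsim le (- y) (k + y).
  by case=> _ b; apply: nky; apply: ltr h1 (ltr b sy2).
by have := Q2 p0y' ns; rewrite add0r addrCA addNr addr0.
Qed.

Lemma nAD g a : ~ inA g -> inA a -> ~ inA (g + a).
Proof. by move=> hg ha h; apply: hg; have := inAD h (inAN ha); rewrite addrK. Qed.

Lemma plus_pos g b : ~ inA g -> inA b -> le 0 b -> le g (g + b).
Proof.
move=> hg hb h.
have [_ n] := K hb hg.
have ns : ~ qsim le b g by case.
by have := Q2 h ns; rewrite add0r addrC.
Qed.

Lemma plus_neg g b : ~ inA g -> inA b -> le b 0 -> le (g + b) g.
Proof.
move=> hg hb h.
have [_ n] := K inA0 hg.
have ns : ~ qsim le 0 g by case.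
by have := Q2 h ns; rewrite add0r addrC.
Qed.

Lemma shift g a : ~ inA g -> inA a -> qsim le (g + a) g.
Proof.
move=> hg ha.
case: (classic (a = 0)) => [->|na0]; first by rewrite addr0.
have na : ~ qsim le a (- a) by move=> s; apply: na0; exact: ha s.
have [[sg1 sg2] _] := nA_pos hg.
have hga := nAD hg ha.
have [[sh1 sh2] _] := nA_pos hga.
have na0' : - a <> 0 by move/eqP; rewrite oppr_eq0 => /eqP.
case: (ltot 0 a) => h.
- split; last exact: plus_pos.
  have := plus_neg (nAN hg) (inAN ha) (Dl na h); rewrite -opprD => h2.
  exact: ltr sh1 (ltr h2 sg2).
- split; first exact: plus_neg.
  have [h2 _] := B1 h na0.
  have := plus_pos (nAN hg) (inAN ha) h2; rewrite -opprD => h3.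
  exact: ltr sg1 (ltr h3 sh2).
Qed.

Lemma ultra g h : ~ inA g -> le g h -> le (g + h) h.
Proof.
move=> hg hgh; apply: NNPP => n.
have hk : le h (g + h) by case: (ltot (g + h) h).
have [[sg1 sg2] _] := nA_pos hg.
have l1 : le (- g) (g + h) := ltr sg2 (ltr hgh hk).
have l2 : ~ le (g + h) (- g) by move=> b; apply: n; apply: ltr b (ltr sg2 hgh).
have [_ a] := M (nAN hg) l1 l2.
by apply: n; move: a; rewrite addrAC subrr add0r.
Qed.
End Theory.

Definition dec (P : Prop) : bool := if excluded_middle_informative P then true else false.
Lemma decP (P : Prop) : reflect P (dec P).
Proof. rewrite /dec; case: excluded_middle_informative => h; by constructor. Qed.

Unset Implicit Arguments.
Section Constr.
Variables (G : zmodType) (le : G -> G -> Prop).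
Definition ok := quasi_order le /\ total_rel le /\ compatible_add le.

Ltac destr_ok h := let lr := fresh "lr" in let ltr := fresh "ltr" in
  let ltot := fresh "ltot" in let q1 := fresh "q1" in let q2 := fresh "q2" in
  have [[lr ltr] [ltot [q1 q2]]] := h.

Definition inAP (g : G) := ok -> inA le g.
Definition inAb g := dec (inAP g).

Lemma inAP0 : inAP 0.
Proof. by move=> _ _. Qed.
Lemma inAPN g : inAP g -> inAP (- g).
Proof. move=> h o; destr_ok o; exact: (inAN lr ltr ltot q1 q2 (h o)). Qed.
Lemma inAPD g h : inAP g -> inAP h -> inAP (g + h).
Proof. move=> a b o; destr_ok o; exact: (inAD lr ltr ltot q1 q2 (a o) (b o)). Qed.

Definition At := {g : G | inAb g}.
HB.instance Definition _ := Choice.on At.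
Definition A0 : At := exist _ 0 (introT (decP _) inAP0).
Definition Aopp (x : At) : At := exist _ (- val x) (introT (decP _) (inAPN _ (elimT (decP _) (valP x)))).
Definition Aadd (x y : At) : At := exist _ (val x + val y)
  (introT (decP _) (inAPD _ _ (elimT (decP _) (valP x)) (elimT (decP _) (valP y)))).
Fact Aaddr : associative Aadd. Proof. by move=> x y z; apply: val_inj; rewrite /= addrA. Qed.
Fact AaddC : commutative Aadd. Proof. by move=> x y; apply: val_inj; rewrite /= addrC. Qed.
Fact Aadd0 : left_id A0 Aadd. Proof. by move=> x; apply: val_inj; rewrite /= add0r. Qed.
Fact AaddN : left_inverse A0 Aopp Aadd. Proof. by move=> x; apply: val_inj; rewrite /= addNr. Qed.
HB.instance Definition _ := GRing.isZmodule.Build At Aaddr AaddC Aadd0 AaddN.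
Definition iota (x : At) : G := val x.
Fact iota_morph : zmod_morphism iota. Proof. by []. Qed.
HB.instance Definition _ := GRing.isZmodMorphism.Build At G iota iota_morph.

Lemma inAbP g : reflect (inAP g) (inAb g).
Proof. exact: decP. Qed.

Lemma arep_ex g : exists h, dec (inAP (h - g)).
Proof. by exists g; apply/decP; rewrite subrr; apply: inAP0. Qed.
Definition arep g := xchoose (arep_ex g).
Lemma arep_spec g : inAP (arep g - g).
Proof. exact: (elimT (decP _) (xchooseP (arep_ex g))). Qed.
Lemma arep_eq g h : inAP (g - h) -> arep g = arep h.
Proof.
move=> hgh; apply: eq_xchoose => x; apply/decP/decP => hx.
- by have := inAPD _ _ hx hgh; rewrite addrA subrK.
- by have := inAPD _ _ hx (inAPN _ hgh); rewrite opprB addrA subrK.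
Qed.
Lemma arep_inv g h : arep g = arep h -> inAP (g - h).
Proof.
move=> e; have := inAPD _ _ (arep_spec h) (inAPN _ (arep_spec g)).
by rewrite e opprB addrC addrA subrK.
Qed.
Lemma arep_idem g : arep (arep g) = arep g.
Proof. exact: arep_eq (arep_spec g). Qed.
Lemma arep_addl g h : arep (arep g + h) = arep (g + h).
Proof. by apply: arep_eq; rewrite opprD addrACA subrr addr0; apply: arep_spec. Qed.
Lemma arep_addr g h : arep (g + arep h) = arep (g + h).
Proof. by rewrite addrC arep_addl addrC. Qed.
Lemma arep_opp g : arep (- arep g) = arep (- g).
Proof.
apply: arep_eq; rewrite opprK; have := inAPN _ (arep_spec g).
by rewrite opprB addrC.
Qed.

Definition Ft := {g : G | arep g == g}.
HB.instance Definition _ := Choice.on Ft.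
Definition Fmk g : Ft := exist _ (arep g) (introT eqP (arep_idem g)).
Lemma valFt (x : Ft) : arep (val x) = val x.
Proof. exact: (eqP (valP x)). Qed.
Definition F0 : Ft := Fmk 0.
Definition Fopp (x : Ft) : Ft := Fmk (- val x).
Definition Fadd (x y : Ft) : Ft := Fmk (val x + val y).
Fact FaddA : associative Fadd.
Proof. by move=> x y z; apply: val_inj; rewrite /= arep_addl arep_addr addrA. Qed.
Fact FaddC : commutative Fadd. Proof. by move=> x y; apply: val_inj; rewrite /= addrC. Qed.
Fact Fadd0 : left_id F0 Fadd.
Proof. by move=> x; apply: val_inj; rewrite /= arep_addl add0r valFt. Qed.
Fact FaddN : left_inverse F0 Fopp Fadd.
Proof. by move=> x; apply: val_inj; rewrite /= arep_addl addNr. Qed.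
HB.instance Definition _ := GRing.isZmodule.Build Ft FaddA FaddC Fadd0 FaddN.
Definition pi (g : G) : Ft := Fmk g.
Fact pi_morph : zmod_morphism pi.
Proof. by move=> g h; apply: val_inj; rewrite /= arep_addl arep_opp arep_addr. Qed.
HB.instance Definition _ := GRing.isZmodMorphism.Build G Ft pi pi_morph.

Lemma valF0 : val (0 : Ft) = arep 0.
Proof. by []. Qed.

Definition lep (x y : G) := ok -> le x y.
Definition simp (x y : G) := lep x y /\ lep y x.
Lemma lep_refl x : lep x x. Proof. by move=> o; destr_ok o. Qed.
Lemma lep_trans x y z : lep x y -> lep y z -> lep x z.
Proof. by move=> a b o; destr_ok o; apply: ltr (a o) (b o). Qed.
Lemma lep_total x y : lep x y \/ lep y x.
Proof.
case: (classic ok) => o; last by left.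
destr_ok o; by case: (ltot x y) => h; [left|right].
Qed.
Lemma crep_ex g : exists h, dec (simp h g).
Proof. by exists g; apply/decP; split; apply: lep_refl. Qed.
Definition crep g := xchoose (crep_ex g).
Lemma crep_spec g : simp (crep g) g.
Proof. exact: (elimT (decP _) (xchooseP (crep_ex g))). Qed.
Lemma crep_eq g h : simp g h -> crep g = crep h.
Proof.
move=> [a b]; apply: eq_xchoose => x; apply/decP/decP => [[c d]|[c d]]; split.
- exact: lep_trans c a.
- exact: lep_trans b d.
- exact: lep_trans c b.
- exact: lep_trans a d.
Qed.
Lemma crep_idem g : crep (crep g) = crep g.
Proof. exact: crep_eq (crep_spec g). Qed.

Definition Gt := {g : G | crep g == g}.
HB.instance Definition _ := Choice.on Gt.
Definition gle (x y : Gt) : bool := dec (lep (val y) (val x)).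
Fact gle_refl : reflexive gle. Proof. by move=> x; apply/decP; apply: lep_refl. Qed.
Fact gle_anti : antisymmetric gle.
Proof.
move=> x y /andP [/decP a /decP b]; apply: val_inj.
by rewrite -(eqP (valP x)) -(eqP (valP y)); apply: crep_eq; split.
Qed.
Fact gle_trans : transitive gle.
Proof. by move=> y x z /decP a /decP b; apply/decP; apply: lep_trans b a. Qed.
Fact gle_total : total gle.
Proof. by move=> x y; case: (lep_total (val x) (val y)) => h; apply/orP; [right|left]; apply/decP. Qed.
HB.instance Definition _ := Order.Le_isPOrder.Build (Order.Disp tt tt) Gt gle_refl gle_anti gle_trans.
HB.instance Definition _ := Order.POrder_isTotal.Build (Order.Disp tt tt) Gt gle_total.

Definition gam g : Gt := exist _ (crep g) (introT eqP (crep_idem g)).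
Lemma gamle g h : ((gam g) <= (gam h))%O = dec (lep (crep h) (crep g)).
Proof. by []. Qed.

Definition w (g : G) : option Gt := if inAb g then None else Some (gam g).
Definition v (f : Ft) : option Gt := w (val f).
End Constr.
Arguments ok {G}.
Arguments inAP {G}.
Arguments inAb {G}.
Arguments At {G}.
Arguments Ft {G}.
Arguments Gt {G}.
Arguments arep {G}.
Arguments arep_spec {G}.
Arguments arep_eq {G}.
Arguments arep_inv {G}.
Arguments valFt {G}.
Arguments Fmk {G}.
Arguments pi {G}.
Arguments iota {G}.
Arguments lep {G}.
Arguments simp {G}.
Arguments crep {G}.
Arguments crep_spec {G}.
Arguments crep_eq {G}.
Arguments gam {G}.
Arguments gamle {G}.
Arguments w {G}.
Arguments v {G}.
Arguments valF0 {G}.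
Arguments inAPD {G}.
Arguments inAPN {G}.
Arguments inAP0 {G}.
Arguments inAbP {G}.
Arguments arep_idem {G}.

Section Fwd.
Variables (G : zmodType) (le : G -> G -> Prop).
Hypothesis o : ok le.
Let lr : forall x, le x x := proj1 (proj1 o).
Let ltr : forall x y z, le x y -> le y z -> le x z := proj2 (proj1 o).
Let ltot : forall x y, le x y \/ le y x := proj1 (proj2 o).
Let q1 : forall x : G, qsim le x 0 -> x = 0 := proj1 (proj2 (proj2 o)).
Let q2 : forall x y z : G, le x y -> ~ qsim le y z -> le (x + z) (y + z) := proj2 (proj2 (proj2 o)).

Lemma inAP_iff g : inAP le g <-> inA le g.
Proof. by split => [h|h _]; [apply: h|]. Qed.
Lemma inAb_true g : inA le g -> inAb le g = true.
Proof. by move=> h; apply/decP => _. Qed.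
Lemma inAb_false g : ~ inA le g -> inAb le g = false.
Proof. by move=> h; apply/decP => h'; apply: h; apply: h'. Qed.
Lemma inAb_iff g : inAb le g <-> inA le g.
Proof. by split => [/decP h|h]; [apply: h|apply: inAb_true]. Qed.

Lemma crep_sim g : qsim le (crep le g) g.
Proof. by have [a b] := crep_spec le g; split; [apply: a|apply: b]. Qed.

Lemma gamle_iff g h : ((gam le g) <= (gam le h))%O <-> le h g.
Proof.
rewrite gamle; split => [/decP a|a]; have [c1 c2] := crep_sim g; have [d1 d2] := crep_sim h.
- exact: ltr _ _ _ d2 (ltr _ _ _ (a o) c1).
- by apply/decP => _; apply: ltr _ _ _ d1 (ltr _ _ _ a c2).
Qed.

Lemma gam_eq g h : qsim le g h -> gam le g = gam le h.
Proof. by move=> [a b]; apply: val_inj; apply: crep_eq; split => _. Qed.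

Lemma w_shift g a : inA le a -> w le (g + a) = w le g.
Proof.
move=> ha; rewrite /w.
case: (classic (inA le g)) => hg.
  by rewrite (inAb_true _ hg) (inAb_true _ (inAD lr ltr ltot q1 q2 hg ha)).
rewrite (inAb_false _ hg) (inAb_false _ (nAD lr ltr ltot q1 q2 hg ha)).
by rewrite (gam_eq _ _ (shift lr ltr ltot q1 q2 hg ha)).
Qed.

Lemma w_arep g : w le (arep le g) = w le g.
Proof.
have e : arep le g = g + (arep le g - g) by rewrite addrC subrK.
by rewrite e w_shift //; apply/inAP_iff; apply: arep_spec.
Qed.

Lemma v_pi g : v le (pi le g) = w le g.
Proof. exact: w_arep. Qed.

Lemma w_opp g : w le (- g) = w le g.
Proof.
rewrite /w; case: (classic (inA le g)) => hg.
  by rewrite (inAb_true _ hg) (inAb_true _ (inAN lr ltr ltot q1 q2 hg)).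
rewrite (inAb_false _ hg) (inAb_false _ (nAN lr ltr ltot q1 q2 hg)).
have [[s1 s2] _] := nA_pos lr ltr ltot q1 q2 hg.
by rewrite (gam_eq _ _ (conj s2 s1)).
Qed.

Lemma w_cmp g h : ~ inA le g -> ~ inA le h -> (ole (w le h) (w le g) <-> le g h).
Proof. by move=> hg hh; rewrite /w inAb_false // inAb_false //= gamle_iff. Qed.

Lemma omin_None d (T : orderType d) (a : option T) : omin a None = a.
Proof. by case: a. Qed.

Lemma w_ultra g h : ole (omin (w le g) (w le h)) (w le (g + h)).
Proof.
case: (classic (inA le (g + h))) => hgh.
  by rewrite {3}/w inAb_true.
case: (classic (inA le g)) => hg.
  rewrite {1}/w inAb_true //= addrC w_shift //; exact: ole_refl.
case: (classic (inA le h)) => hh.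
  rewrite {2}/w inAb_true // omin_None w_shift //; exact: ole_refl.
rewrite /w !inAb_false //=.
case: (ltot g h) => a.
- rewrite min_r; last by apply/gamle_iff.
  by apply/gamle_iff; apply: (ultra lr ltr ltot q1 q2 hg a).
- rewrite min_l; last by apply/gamle_iff.
  by apply/gamle_iff; rewrite addrC; apply: (ultra lr ltr ltot q1 q2 hh a).
Qed.

Lemma exA g : (exists b : At le, iota le b = g) <-> inA le g.
Proof.
split => [[b <-]|hg]; first exact: (proj1 (inAb_iff _) (valP b)).
by exists (exist _ g (inAb_true g hg)).
Qed.

Lemma fwd : exists (A F : zmodType) (iota : {additive A -> G}) (pi : {additive G -> F})
          (leo : A -> A -> Prop) (d : Order.disp_t) (Gam : orderType d)
          (v : F -> option Gam),
     short_exact iota pi /\ group_order leo /\ valuation v /\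
     forall g h : G,
       le g h <->
       ((exists a b : A, iota a = g /\ iota b = h /\ leo a b) \/
        ((~ exists b : A, iota b = h) /\ ole (v (pi h)) (v (pi g)))).
Proof.
exists (At le), (Ft le), (iota le), (pi le), (fun a b => le (val a) (val b)),
  (Order.Disp tt tt), (Gt le), (v le).
have inAv : forall x : At le, inA le (val x) by move=> x; exact: (proj1 (inAb_iff _) (valP x)).
split; [|split; [|split]].
- split; [|split].
  + by move=> x y e; apply: val_inj.
  + by move=> y; exists (val y); apply: val_inj; exact: valFt.
  + move=> g; split.
    * move=> [a <-]; apply: val_inj; rewrite valF0.
      change (arep le (val a) = arep le 0); apply: arep_eq; rewrite subr0.
      by move=> _; apply: inAv.
    * move=> e; have e' : arep le g = arep le 0 by exact: (congr1 val e).
      have := arep_inv _ _ _ e'; rewrite subr0 => hg.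
      by apply/exA; apply: hg.
- split; [by move=> x; apply: lr|split; [|split; [by move=> x y z; apply: ltr|split; [by move=> x y; apply: ltot|]]]].
  + move=> x y a b; apply: val_inj.
    exact: (E lr ltr ltot q1 q2 (inAv x) (inAv y) (conj a b)).
  + move=> x y z hxy.
    have hx := inAv x; have hy := inAv y; have hz := inAv z.
    apply: (proj2 (leA lr ltr ltot q1 q2 (inAv (x + z)) (inAv (y + z)))).
    change (le 0 ((val y + val z) - (val x + val z))).
    rewrite opprD addrACA subrr addr0.
    exact: (proj1 (leA lr ltr ltot q1 q2 hx hy) hxy).
- split; [|split].
  + move=> a; split => [|->]; last first.
      by rewrite /v valF0 w_arep /w (inAb_true _ (inA0 lr ltr ltot q1 q2)).
    rewrite /v /w; case: ifP => // /decP ha _.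
    apply: val_inj; rewrite valF0 -(valFt _ a); apply: arep_eq; rewrite subr0; exact: ha.
  + move=> a b; rewrite /v.
    have -> : val (a + b) = arep le (val a + val b) by [].
    rewrite w_arep; exact: w_ultra.
  + move=> a; rewrite /v.
    have -> : val (- a) = arep le (- val a) by [].
    by rewrite w_arep w_opp.
- move=> g h; rewrite !v_pi.
  case: (classic (inA le g)) => ig; case: (classic (inA le h)) => ih.
  + split => [H|[[a [b [ea [eb H]]]]|[nh _]]].
    * by left; exists (exist _ g (inAb_true g ig)), (exist _ h (inAb_true h ih)).
    * by rewrite -ea -eb; exact: H.
    * by case: nh; apply/exA.
  + split => [_|_].
    * right; split; first by move/exA.
      by rewrite {2}/w (inAb_true _ ig).
    * exact: (proj1 (K lr ltr ltot q1 q2 ig ih)).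
  + have nhg := proj2 (K lr ltr ltot q1 q2 ih ig).
    split => [H|[[a [b [ea _]]]|[nh _]]].
    * by case: nhg.
    * by case: ig; rewrite -ea; apply/exA; exists a.
    * by case: nh; apply/exA.
  + split => [H|[[a [b [ea _]]]|[_ H]]].
    * by right; split; [move/exA|apply/(w_cmp _ _ ig ih)].
    * by case: ig; rewrite -ea; apply/exA; exists a.
    * exact: (proj1 (w_cmp _ _ ig ih) H).
Qed.
End Fwd.

Theorem mainTheorem3 (G : zmodType) (le : G -> G -> Prop) :
  quasi_order le -> total_rel le ->
  (compatible_add le <->
   exists (A F : zmodType) (iota : {additive A -> G}) (pi : {additive G -> F})
          (leo : A -> A -> Prop) (d : Order.disp_t) (Gam : orderType d)
          (v : F -> option Gam),
     short_exact iota pi /\ group_order leo /\ valuation v /\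
     forall g h : G,
       le g h <->
       ((exists a b : A, iota a = g /\ iota b = h /\ leo a b) \/
        ((~ exists b : A, iota b = h) /\ ole (v (pi h)) (v (pi g))))).
Proof.
move=> qo tot; split.
- by move=> c; apply: fwd; split; [|split].
- move=> [A [F [io [p [leo [d [Gam [v [Hex [Hgo [Hv Hr]]]]]]]]]]].
  split.
  + exact: (rev_Q1 Hex Hgo Hr).
  + exact: (rev_Q2 Hex Hgo Hv Hr).
Qed.
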